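(* Let $n\ge2$ and let $\overline{x}=x_1,\dots,x_n$ be variables. For a subsequence $x_{i_1},\dots,x_{i_k}$ let $\pi_k:S^{fd}_n(\mathbb{Q})\to S^{fd}_k(\mathbb{Q})$ be the projection $\pi_k(p)=\{\exists x_{i_{k+1}},\dots,x_{i_n}\,\phi(x_1,\dots,x_n):\phi\in p\}$, where $x_{i_{k+1}},\dots,x_{i_n}$ are the remaining variables. Let $S^{<}_n(\mathbb{Q})\subseteq S^{fd}_n(\mathbb{Q})$ be the set of types $p$ with $x_1<x_2<\cdots<x_n\in p$. Then the map $\nabla:S^{<}_n(\mathbb{Q})\to S^{fd}_1(\mathbb{Q})\times S^{<}_{n-1}(\mathbb{Q})$, $\nabla(p)=\langle\pi_1(p),\pi_{n-1}(p)\rangle$, where $\pi_1$ is the projection onto $x_1$ and $\pi_{n-1}$ the projection onto $x_2,\dots,x_n$, is injective.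
   Context: We work in the theory of the dense linear order $\langle\mathbb{Q},\le\rangle$ (DLO). $S_n(\mathbb{Q})$ is the set of complete $n$-types with parameters from $\mathbb{Q}$, and $S^{fd}_n(\mathbb{Q})\subseteq S_n(\mathbb{Q})$ is the set of those types that are definable over a finite set of parameters $Q_0\subseteq\mathbb{Q}$, i.e. for every formula $\phi(\overline{x},\overline{y})$ without parameters there is a formula $\psi(\overline{y},\overline{b})$ with $\overline b$ from $Q_0$ such that $\phi(\overline{x},\overline{a})\in p\iff\psi(\overline{a},\overline{b})$ holds. *)

(* Defs.v *)
From mathcomp Require Import all_boot all_order all_algebra.
Set Implicit Arguments. Unset Strict Implicit. Unset Printing Implicit Defensive.
Import Order.TTheory GRing.Theory Num.Theory.
Local Open Scope ring_scope.

(* Terms: variables (de Bruijn indices) or parameters from Q. *)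
Inductive term : Type :=
| TVar : nat -> term
| TPar : rat -> term.

(* Formulas of the language {<=} (with equality).  [FEx f] binds index 0.
   At top level, free index i stands for the variable x_(i+1). *)
Inductive fml : Type :=
| FLe : term -> term -> fml
| FEq : term -> term -> fml
| FBot : fml
| FNeg : fml -> fml
| FAnd : fml -> fml -> fml
| FEx : fml -> fml.

Definition FTrue : fml := FNeg FBot.
Definition FLt (t u : term) : fml := FAnd (FLe t u) (FNeg (FEq t u)).

Definition scons (a : rat) (e : nat -> rat) : nat -> rat :=
  fun i => match i with 0%N => a | i'.+1 => e i' end.

Definition eval_t (e : nat -> rat) (t : term) : rat :=
  match t with TVar i => e i | TPar q => q end.

Fixpoint sat (e : nat -> rat) (f : fml) : Prop :=
  match f with
  | FLe t u => (eval_t e t <= eval_t e u)%R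
  | FEq t u => eval_t e t = eval_t e u
  | FBot => False
  | FNeg g => ~ sat e g
  | FAnd g h => sat e g /\ sat e h
  | FEx g => exists a : rat, sat (scons a e) g
  end.

Definition term_fvlt (n : nat) (t : term) : Prop :=
  match t with TVar i => (i < n)%N | TPar _ => True end.

Fixpoint fvlt (n : nat) (f : fml) : Prop :=
  match f with
  | FLe t u | FEq t u => term_fvlt n t /\ term_fvlt n u
  | FBot => True
  | FNeg g => fvlt n g
  | FAnd g h => fvlt n g /\ fvlt n h
  | FEx g => fvlt n.+1 g
  end.

Definition term_pfree (t : term) : Prop :=
  match t with TVar _ => True | TPar _ => False end.

Fixpoint pfree (f : fml) : Prop :=
  match f with
  | FLe t u | FEq t u => term_pfree t /\ term_pfree u
  | FBot => True
  | FNeg g => pfree g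
  | FAnd g h => pfree g /\ pfree h
  | FEx g => pfree g
  end.

Definition term_params_in (Q0 : seq rat) (t : term) : Prop :=
  match t with TVar _ => True | TPar q => q \in Q0 end.

Fixpoint params_in (Q0 : seq rat) (f : fml) : Prop :=
  match f with
  | FLe t u | FEq t u => term_params_in Q0 t /\ term_params_in Q0 u
  | FBot => True
  | FNeg g => params_in Q0 g
  | FAnd g h => params_in Q0 g /\ params_in Q0 h
  | FEx g => params_in Q0 g
  end.

(* [inst n a f] = f(x_1..x_n, a_1, a_2, ...): the free variables of index
   >= n are replaced by the parameters a 0, a 1, ... *)
Definition inst_t (d n : nat) (a : nat -> rat) (t : term) : term :=
  match t with
  | TVar i => if (i < d + n)%N then TVar i else TPar (a (i - (d + n))%N)
  | TPar q => TPar q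
  end.

Fixpoint inst_aux (d n : nat) (a : nat -> rat) (f : fml) : fml :=
  match f with
  | FLe t u => FLe (inst_t d n a t) (inst_t d n a u)
  | FEq t u => FEq (inst_t d n a t) (inst_t d n a u)
  | FBot => FBot
  | FNeg g => FNeg (inst_aux d n a g)
  | FAnd g h => FAnd (inst_aux d n a g) (inst_aux d n a h)
  | FEx g => FEx (inst_aux d.+1 n a g)
  end.

Definition inst (n : nat) (a : nat -> rat) (f : fml) : fml := inst_aux 0 n a f.

Definition ren_t (d : nat) (r : nat -> nat) (t : term) : term :=
  match t with
  | TVar i => if (i < d)%N then TVar i else TVar (d + r (i - d))%N
  | TPar q => TPar q
  end.

Fixpoint ren_aux (d : nat) (r : nat -> nat) (f : fml) : fml :=
  match f with
  | FLe t u => FLe (ren_t d r t) (ren_t d r u)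
  | FEq t u => FEq (ren_t d r t) (ren_t d r u)
  | FBot => FBot
  | FNeg g => FNeg (ren_aux d r g)
  | FAnd g h => FAnd (ren_aux d r g) (ren_aux d r h)
  | FEx g => FEx (ren_aux d.+1 r g)
  end.

Definition ren (r : nat -> nat) (f : fml) : fml := ren_aux 0 r f.

Fixpoint InL (f : fml) (s : seq fml) : Prop :=
  match s with [::] => False | g :: s' => g = f \/ InL f s' end.

Definition ftype := fml -> Prop.

(* complete n-type over Q: a complete set of formulas in x_1..x_n with
   parameters from Q that is finitely satisfiable in (Q,<=)
   (equivalently, consistent with the elementary diagram of Q). *)
Definition is_type (n : nat) (p : ftype) : Prop :=
  [/\ (forall f, p f -> fvlt n f),
      (forall f, fvlt n f -> p f \/ p (FNeg f)) &
      (forall s : seq fml, (forall f, InL f s -> p f) ->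
         exists e : nat -> rat, forall f, InL f s -> sat e f)].

(* p is definable over the finite set Q0 of parameters:
   for every parameter-free phi(x_1..x_n, y_1..y_m) there is psi(y, b) with
   b from Q0 such that phi(x, a) \in p <-> Q |= psi(a, b). *)
Definition definable_over (n : nat) (p : ftype) (Q0 : seq rat) : Prop :=
  forall (m : nat) (phi : fml), pfree phi -> fvlt (n + m) phi ->
    exists psi : fml, [/\ fvlt m psi, params_in Q0 psi &
      forall a : nat -> rat, p (inst n a phi) <-> sat a psi].

Definition in_Sfd (n : nat) (p : ftype) : Prop :=
  is_type n p /\ exists Q0 : seq rat, definable_over n p Q0.

(* the formula x_1 < x_2 < ... < x_k+1 (conjunction of consecutive <) *)
Fixpoint chain (k : nat) : fml :=
  match k with
  | 0%N => FTrue
  | k'.+1 => FAnd (chain k') (FLt (TVar k') (TVar k'.+1))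
  end.

Definition in_Slt (n : nat) (p : ftype) : Prop :=
  in_Sfd n p /\ p (chain n.-1).

Definition proj_first (p : ftype) : ftype :=
  fun psi => fvlt 1 psi /\ p psi.

(* projection onto x_2,...,x_n, renamed as x_1,...,x_(n-1) *)
Definition proj_rest (n : nat) (p : ftype) : ftype :=
  fun psi => fvlt n.-1 psi /\ p (ren S psi).

Definition nabla (n : nat) (p : ftype) : ftype * ftype :=
  (proj_first p, proj_rest n p).

(* Main.v *)
Require Import Defs.
From mathcomp Require Import all_boot all_order all_algebra.
From mathcomp Require Import lra zify.
From Stdlib Require Import FunctionalExtensionality PropExtensionality.
Set Implicit Arguments. Unset Strict Implicit. Unset Printing Implicit Defensive.
Import Order.TTheory GRing.Theory Num.Theory.
Local Open Scope ring_scope.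

Definition iso (w : seq (rat * rat)) :=
  forall x y, x \in w -> y \in w -> (x.1 <= y.1) = (x.2 <= y.2).

Definition swp (x : rat * rat) := (x.2, x.1).

Lemma iso_swap w : iso w -> iso (map swp w).
Proof.
move=> H x y /mapP [x' hx ->] /mapP [y' hy ->] /=; by rewrite (H _ _ hx hy).
Qed.

Lemma swpK w : map swp (map swp w) = w.
Proof. by elim: w => [|[a b] w IH] //=; rewrite IH. Qed.

Lemma exmax (x : rat * rat) s :
  exists2 m, m \in x :: s & forall y, y \in x :: s -> y.1 <= m.1.
Proof.
elim: s x => [|z s IH] x.
  exists x; first by rewrite inE. by move=> y; rewrite inE => /eqP ->.
have [m hm Hm] := IH z.
case: (leP x.1 m.1) => h.
  exists m; first by rewrite inE hm orbT.
  move=> y; rewrite inE => /orP [/eqP ->|]; [done|exact: Hm].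
exists x; first by rewrite inE eqxx.
move=> y; rewrite inE => /orP [/eqP ->|/Hm hy]; first done.
apply: (le_trans hy); exact: ltW.
Qed.

Lemma exmin (x : rat * rat) s :
  exists2 m, m \in x :: s & forall y, y \in x :: s -> m.1 <= y.1.
Proof.
elim: s x => [|z s IH] x.
  exists x; first by rewrite inE. by move=> y; rewrite inE => /eqP ->.
have [m hm Hm] := IH z.
case: (leP m.1 x.1) => h.
  exists m; first by rewrite inE hm orbT.
  move=> y; rewrite inE => /orP [/eqP ->|]; [done|exact: Hm].
exists x; first by rewrite inE eqxx.
move=> y; rewrite inE => /orP [/eqP ->|/Hm hy]; first done.
apply: le_trans hy; exact: ltW.
Qed.

Lemma ext w a : iso w -> exists a', iso ((a, a') :: w).
Proof.
move=> H.
case: (boolP (has (fun x => x.1 == a) w)) => [/hasP [x hx /eqP hxa]|hn].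
  exists x.2 => y z; rewrite !inE; case/orP=> [/eqP ->|hy]; case/orP=> [/eqP ->|hz] /=; rewrite ?lexx //.
  - by rewrite -hxa (H _ _ hx hz).
  - by rewrite -hxa (H _ _ hy hx).
  - exact: H.
suff [a' Ha'] : exists a', forall x, x \in w ->
    (x.1 < a -> x.2 < a') /\ (a < x.1 -> a' < x.2).
  exists a' => y z; rewrite !inE; case/orP=> [/eqP ->|hy]; case/orP=> [/eqP ->|hz] /=; rewrite ?lexx //.
  - have hza : z.1 != a by apply: contraNN hn => e; apply/hasP; exists z.
    have [h1 h2] := Ha' _ hz.
    case: (ltgtP z.1 a) hza => // h _.
      by rewrite leNgt (h1 h).
    by rewrite (ltW (h2 h)).
  - have hya : y.1 != a by apply: contraNN hn => e; apply/hasP; exists y.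
    have [h1 h2] := Ha' _ hy.
    case: (ltgtP y.1 a) hya => // h _.
      by rewrite (ltW (h1 h)).
    by rewrite leNgt (h2 h).
  - exact: H.
set lo := [seq x <- w | x.1 < a].
set hi := [seq x <- w | a < x.1].
have Hlo x : x \in w -> x.1 < a -> x \in lo by move=> h1 h2; rewrite mem_filter h2.
have Hhi x : x \in w -> a < x.1 -> x \in hi by move=> h1 h2; rewrite mem_filter h2.
have cases (s : seq (rat * rat)) : s = [::] \/ exists y0 s', s = y0 :: s'.
  case: s => [|y0 s']; [by left|by right; exists y0, s'].
have [lo0|[x0 [s Elo]]] := cases lo.
  have [hi0|[y0 [s Ehi]]] := cases hi.
    exists 0 => x hx; split => h.
      by have := Hlo _ hx h; rewrite lo0.
    by have := Hhi _ hx h; rewrite hi0.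
  have [M hM HM] := exmin y0 s. rewrite -Ehi in hM HM.
  have hMw : M \in w by move: hM; rewrite mem_filter => /andP [].
  exists (M.2 - 1) => x hx; split => h.
    by have := Hlo _ hx h; rewrite lo0.
  have hMx := HM _ (Hhi _ hx h). rewrite (H _ _ hMw hx) in hMx. lra.
have [m hm Hm] := exmax x0 s. rewrite -Elo in hm Hm.
have hmw : m \in w by move: hm; rewrite mem_filter => /andP [].
have hma : m.1 < a by move: hm; rewrite mem_filter => /andP [].
have [hi0|[y0 [s' Ehi]]] := cases hi.
  exists (m.2 + 1) => x hx; split => h.
    have hxm := Hm _ (Hlo _ hx h). rewrite (H _ _ hx hmw) in hxm. lra.
  by have := Hhi _ hx h; rewrite hi0.
have [M hM HM] := exmin y0 s'. rewrite -Ehi in hM HM.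
have hMw : M \in w by move: hM; rewrite mem_filter => /andP [].
have hMa : a < M.1 by move: hM; rewrite mem_filter => /andP [].
have hmM : m.2 < M.2.
  have := H _ _ hMw hmw. rewrite leNgt (lt_trans hma hMa) /=.
  by move/esym/negbT; rewrite -ltNge.
exists ((m.2 + M.2) / 2) => x hx; split => h.
  have hxm := Hm _ (Hlo _ hx h). rewrite (H _ _ hx hmw) in hxm. lra.
have hMx := HM _ (Hhi _ hx h). rewrite (H _ _ hMw hx) in hMx. lra.
Qed.

Lemma ext' w a' : iso w -> exists a, iso ((a, a') :: w).
Proof.
move=> /iso_swap H.
have [a Ha] := ext a' H.
exists a. have := iso_swap Ha. by rewrite /= swpK.
Qed.

Lemma term_in k (P : seq rat) (e e' : nat -> rat) (w : seq (rat * rat)) t : term_fvlt k t -> term_params_in P t ->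
  (forall i, (i < k)%N -> (e i, e' i) \in w) ->
  (forall c, c \in P -> (c, c) \in w) ->
  (eval_t e t, eval_t e' t) \in w.
Proof. by case: t => [i|c] /= h1 h2 Hv Hp; [apply: Hv|apply: Hp]. Qed.

Lemma inv f : forall k (P : seq rat) (e e' : nat -> rat) (w : seq (rat * rat)), fvlt k f -> params_in P f -> iso w ->
  (forall i, (i < k)%N -> (e i, e' i) \in w) ->
  (forall c, c \in P -> (c, c) \in w) ->
  (sat e f <-> sat e' f).
Proof.
elim: f => [t u|t u||g IH|g IHg h IHh|g IH] k P e e' w /=.
- move=> [ft fu] [pt pu] Hi Hv Hp.
  by rewrite (Hi _ _ (term_in ft pt Hv Hp) (term_in fu pu Hv Hp)).
- move=> [ft fu] [pt pu] Hi Hv Hp.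
  have h1 := Hi _ _ (term_in ft pt Hv Hp) (term_in fu pu Hv Hp).
  have h2 := Hi _ _ (term_in fu pu Hv Hp) (term_in ft pt Hv Hp).
  simpl in h1, h2.
  split => h; apply/eqP.
    by rewrite eq_le -h1 -h2 -eq_le; apply/eqP.
  by rewrite eq_le h1 h2 -eq_le; apply/eqP.
- by move=> *; tauto.
- move=> fg pg Hi Hv Hp. have := IH k P e e' w fg pg Hi Hv Hp. tauto.
- move=> [fg fh] [pg ph] Hi Hv Hp.
  have := IHg k P e e' w fg pg Hi Hv Hp. have := IHh k P e e' w fh ph Hi Hv Hp.
  tauto.
- move=> fg pg Hi Hv Hp.
  have Hv' a a' i : (i < k.+1)%N -> (scons a e i, scons a' e' i) \in (a, a') :: w.
    case: i => [|i] /= hi; first exact: mem_head.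
    by rewrite inE Hv ?orbT.
  have Hp' a a' c : c \in P -> (c, c) \in (a, a') :: w.
    by move=> hc; rewrite inE Hp ?orbT.
  split => [[a ha]|[a' ha']].
    have [a' Ha'] := ext a Hi.
    exists a'. by apply/(IH k.+1 P _ _ _ fg pg Ha' (Hv' a a') (Hp' a a')).
  have [a Ha] := ext' a' Hi.
  exists a. by apply/(IH k.+1 P _ _ _ fg pg Ha (Hv' a a') (Hp' a a')).
Qed.

Lemma chain_step e k : sat e (chain k) -> forall i, (i < k)%N -> e i < e i.+1.
Proof.
elim: k => [|k IH] //= [hc [hle hne]] i hi.
rewrite ltnS leq_eqVlt in hi; case/orP: hi => [/eqP ->|hik]; last exact: IH.
by rewrite lt_neqAle hle andbT; apply/eqP.
Qed.

Lemma chain_le e k : sat e (chain k) -> forall i j, (i <= k)%N -> (j <= k)%N ->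
  (e i <= e j) = (i <= j)%N.
Proof.
move=> /chain_step H.
have St : forall i j, (i < j)%N -> (j <= k)%N -> e i < e j.
  move=> i; elim=> [|j IH] // hij hj.
  rewrite ltnS leq_eqVlt in hij; case/orP: hij => [/eqP ->|hij]; first by apply: H.
  apply: lt_trans (IH hij (ltnW hj)) (H _ hj).
move=> i j hi hj.
case: (ltngtP i j) => [h|h|->]; last by rewrite lexx.
  by rewrite ltW // St.
by rewrite leNgt St.
Qed.

Lemma InL_cat g s1 s2 : InL g (s1 ++ s2) <-> InL g s1 \/ InL g s2.
Proof. elim: s1 => [|x s IH] /=; tauto. Qed.

Lemma lits (p q : ftype) (X : seq (nat * rat)) (atm : nat * rat -> fml) :
  (forall x, x \in X -> (p (atm x) -> q (atm x)) /\ (p (FNeg (atm x)) -> q (FNeg (atm x)))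
     /\ (p (atm x) \/ p (FNeg (atm x)))) ->
  exists D, (forall g, InL g D -> p g /\ q g) /\
    forall x, x \in X -> InL (atm x) D \/ InL (FNeg (atm x)) D.
Proof.
elim: X => [|x X IH] H; first by exists [::].
have [D [HD1 HD2]] : exists D, (forall g, InL g D -> p g /\ q g) /\
    forall x, x \in X -> InL (atm x) D \/ InL (FNeg (atm x)) D.
  apply: IH => y hy; apply: H; by rewrite inE hy orbT.
have [h1 [h2 h3]] := H x (mem_head x X).
case: h3 => h3.
  exists (atm x :: D); split.
    move=> g /= [<-|hg]; [tauto|exact: HD1].
  move=> y; rewrite inE => /orP [/eqP ->|hy]; first by left; left.
  case: (HD2 y hy) => /=; tauto.
exists (FNeg (atm x) :: D); split.
  move=> g /= [<-|hg]; [tauto|exact: HD1].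
move=> y; rewrite inE => /orP [/eqP ->|hy]; first by right; left.
case: (HD2 y hy) => /=; tauto.
Qed.

Fixpoint params (f : fml) : seq rat :=
  match f with
  | FLe t u | FEq t u =>
      match t, u with
      | TPar a, TPar b => [:: a; b]
      | TPar a, _ => [:: a]
      | _, TPar b => [:: b]
      | _, _ => [::]
      end
  | FBot => [::]
  | FNeg g => params g
  | FAnd g h => params g ++ params h
  | FEx g => params g
  end.

Lemma params_mono P P' f : {subset P <= P'} -> params_in P f -> params_in P' f.
Proof.
move=> S; elim: f => [t u|t u||g IH|g IHg h IHh|g IH] //=;
  try (case: t => [i|a]; case: u => [j|b] /=; intuition).
tauto.
Qed.

Lemma params_ok f : params_in (params f) f.
Proof.
elim: f => [t u|t u||g IH|g IHg h IHh|g IH] //=;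
  try (case: t => [i|a]; case: u => [j|b] /=; by rewrite ?inE ?eqxx ?orbT).
split; apply: params_mono; try eassumption; move=> x hx; rewrite mem_cat hx ?orbT //.
Qed.

Lemma sub n p q : (2 <= n)%N -> in_Slt n p -> in_Slt n q ->
  nabla n p = nabla n q -> forall f, p f -> q f.
Proof.
move=> hn [[[Pfv Pcomp Psat] _] Pch] [[[Qfv Qcomp Qsat] _] Qch] E f pf.
have E1 : proj_first p = proj_first q := f_equal fst E.
have E2 : proj_rest n p = proj_rest n q := f_equal snd E.
have tr1 g : fvlt 1 g -> p g -> q g.
  move=> hg pg. have : proj_first p g by split. by rewrite E1 => [[]].
have tr2 g : fvlt n.-1 g -> p (ren S g) -> q (ren S g).
  move=> hg pg. have : proj_rest n p g by split. by rewrite E2 => [[]].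
set A1 := fun x : nat * rat => FLe (TVar x.1) (TPar x.2).
set A2 := fun x : nat * rat => FLe (TPar x.2) (TVar x.1).
set X := [seq (i, c) | i <- iota 0 n, c <- params f].
have HX x : x \in X -> (x.1 < n)%N.
  move=> /allpairsP [[i c] [/= hi _ ->]] /=. by move: hi; rewrite mem_iota.
have trA (atm : nat * rat -> fml) :
   (forall x, (x.1 < n)%N -> fvlt n (atm x)) ->
   (forall x, (x.1 < 1)%N -> fvlt 1 (atm x)) ->
   (forall i c, atm (i.+1, c) = ren S (atm (i, c)) /\ ((i.+1 < n)%N -> fvlt n.-1 (atm (i, c)))) ->
   forall x, x \in X -> (p (atm x) -> q (atm x)) /\ (p (FNeg (atm x)) -> q (FNeg (atm x)))
     /\ (p (atm x) \/ p (FNeg (atm x))).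
  move=> h1 h2 h3 [i c] /HX /= hi.
  suff: (p (atm (i, c)) -> q (atm (i, c))) /\ (p (FNeg (atm (i, c))) -> q (FNeg (atm (i, c)))).
    by case=> ? ?; split; [|split] => //; apply: Pcomp; apply: h1.
  case: i hi => [|i] hi.
    split; apply: tr1 => //=; exact: h2.
  have [-> h4] := h3 i c.
  split; [exact: (tr2 _ (h4 hi)) | exact: (tr2 (FNeg _) (h4 hi))].
have h1A1 x : (x.1 < n)%N -> fvlt n (A1 x) by move=> h; split.
have h2A1 x : (x.1 < 1)%N -> fvlt 1 (A1 x) by move=> h; split.
have h3A1 i c : A1 (i.+1, c) = ren S (A1 (i, c)) /\ ((i.+1 < n)%N -> fvlt n.-1 (A1 (i, c))).
  split; first by rewrite /A1 /ren /= subn0 add0n.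
  move=> h; split => //=; lia.
have h1A2 x : (x.1 < n)%N -> fvlt n (A2 x) by move=> h; split.
have h2A2 x : (x.1 < 1)%N -> fvlt 1 (A2 x) by move=> h; split.
have h3A2 i c : A2 (i.+1, c) = ren S (A2 (i, c)) /\ ((i.+1 < n)%N -> fvlt n.-1 (A2 (i, c))).
  split; first by rewrite /A2 /ren /= subn0 add0n.
  move=> h; split => //=; lia.
have [D1 [HD1 HD1']] := lits (trA A1 h1A1 h2A1 h3A1).
have [D2 [HD2 HD2']] := lits (trA A2 h1A2 h2A2 h3A2).
case: (Qcomp f (Pfv f pf)) => // qnf.
have Ps : forall g, InL g (f :: chain n.-1 :: D1 ++ D2) -> p g.
  move=> g /= [<-|[<-|/InL_cat [/HD1 []|/HD2 []]]] //.
have Qs : forall g, InL g (FNeg f :: chain n.-1 :: D1 ++ D2) -> q g.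
  move=> g /= [<-|[<-|/InL_cat [/HD1 []|/HD2 []]]] //.
have [e He] := Psat _ Ps.
  have [e' He'] := Qsat _ Qs.
    have Hs1 g : InL g D1 -> sat e g /\ sat e' g.
      by move=> hg; split; [apply: He|apply: He']; right; right; apply/InL_cat; left.
    have Hs2 g : InL g D2 -> sat e g /\ sat e' g.
      by move=> hg; split; [apply: He|apply: He']; right; right; apply/InL_cat; right.
    have Hc : sat e (chain n.-1) /\ sat e' (chain n.-1).
      by split; [apply: He|apply: He']; right; left.
    set w := [seq (e i, e' i) | i <- iota 0 n] ++ [seq (c, c) | c <- params f].
    have Hiso : iso w.
      move=> x y; rewrite !mem_cat.
      case/orP => [/mapP [i hi ->]|/mapP [c hc ->]];
        case/orP => [/mapP [j hj ->]|/mapP [d hd ->]] /=.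
      - rewrite mem_iota in hi; rewrite mem_iota in hj.
        have hi' : (i <= n.-1)%N by lia.
        have hj' : (j <= n.-1)%N by lia.
        by rewrite (chain_le Hc.1 hi' hj') (chain_le Hc.2 hi' hj').
      - have hX : (i, d) \in X by rewrite allpairs_f.
        case: (HD1' _ hX) => /Hs1 [/= h h']; first by rewrite h h'.
        by move/negP/negbTE: h => ->; move/negP/negbTE: h' => ->.
      - have hX : (j, c) \in X by rewrite allpairs_f.
        case: (HD2' _ hX) => /Hs2 [/= h h']; first by rewrite h h'.
        by move/negP/negbTE: h => ->; move/negP/negbTE: h' => ->.
      - by [].
    have Hv i : (i < n)%N -> (e i, e' i) \in w.
      move=> hi; rewrite mem_cat; apply/orP; left; apply: map_f; by rewrite mem_iota.
    have Hp c : c \in params f -> (c, c) \in w.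
      move=> hc; rewrite mem_cat; apply/orP; right; exact: map_f.
    have := inv (Pfv f pf) (params_ok f) Hiso Hv Hp.
    have := He f (or_introl erefl). have := He' (FNeg f) (or_introl erefl).
    simpl; tauto.
Qed.

Theorem mainTheorem13 (n : nat) (hn : (2 <= n)%N) (p q : ftype) :
  in_Slt n p -> in_Slt n q -> nabla n p = nabla n q -> p = q.
Proof.
move=> hp hq E.
apply: functional_extensionality => f.
apply: propositional_extensionality; split.
  exact: (sub hn hp hq E).
exact: (sub hn hq hp (esym E)).
Qed.
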